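(* Let $A$ be a finite alphabet with $k=|A|$, let $L\subseteq A^*$ be $n$-PT, and let $m=f_k(n)$. For every $u\in L$ there is a D-product $P_u$ of length $\ell\leq mk+m+k$ such that $u\in P_u\subseteq L$.
   Context: A D-product is a regular expression $E_1E_2\cdots E_\ell$ where each $E_i$ is either $B^*$ for a subalphabet $B\subseteq A$ or a single letter $a\in A$; $\ell$ is its length, and it also denotes its language. $u\sim_n v$ iff $u,v$ have the same (scattered) subwords of length at most $n$; $L$ is $n$-PT if it is a union of $\sim_n$-classes. The functions $f_k$ ($k\geq1$) are defined by $f_1(n)=n$ and $f_{k+1}(n)=\max_{0\leq m\leq n}\bigl(m f_k(n+1-m)+m+f_k(n-m)\bigr)$. *)

(* Defs.v *)
From mathcomp Require Import all_boot.
Set Implicit Arguments. Unset Strict Implicit. Unset Printing Implicit Defensive.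

Definition simn (A : finType) (n : nat) (u v : seq A) : Prop :=
  forall w : seq A, size w <= n -> subseq w u = subseq w v.

Definition nPT (A : finType) (n : nat) (L : seq A -> Prop) : Prop :=
  forall u v : seq A, simn n u v -> (L u <-> L v).

Inductive ditem (A : finType) : Type :=
  | DStar of {set A}
  | DLetter of A.

Fixpoint dlang (A : finType) (P : seq (ditem A)) (w : seq A) : Prop :=
  match P with
  | [::] => w = [::]
  | DStar B :: P' =>
      exists w1 w2, [/\ w = w1 ++ w2, all (fun x => x \in B) w1 & dlang P' w2]
  | DLetter a :: P' =>
      exists w2, w = a :: w2 /\ dlang P' w2
  end.

(* f_1(n) = n, f_{k+1}(n) = max_{0<=m<=n} (m f_k(n+1-m) + m + f_k(n-m)).
   f 0 is not used (set to n arbitrarily). *)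
Fixpoint fk (k n : nat) {struct k} : nat :=
  match k with
  | 0 => n
  | k'.+1 =>
      if k' is 0 then n
      else \max_(m < n.+1) (m * fk k' (n.+1 - m) + m + fk k' (n - m))
  end.

(* Main.v *)
Require Import Defs.
From mathcomp Require Import all_boot.
From mathcomp Require Import zify.

Set Implicit Arguments. Unset Strict Implicit. Unset Printing Implicit Defensive.

Section Aux.
Variable A : finType.
Implicit Types (s u v w p q : seq A).

Lemma subseq_catP s (x y : seq A) : subseq s (x ++ y) ->
  exists p q, [/\ s = p ++ q, subseq p x & subseq q y].
Proof.
elim: x s => [|a x IH] s /=.
  by move=> H; exists [::], s; split; rewrite ?sub0seq.
case: s => [|c s] /=.
  by move=> _; exists [::], [::]; split; rewrite ?sub0seq.
case: eqP => [->|_] H.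
  have [p [q [-> Hp Hq]]] := IH _ H.
  by exists (a :: p), q; rewrite /= eqxx.
have [p [q [E Hp Hq]]] := IH _ H.
exists p, q; split => //.
exact: subseq_trans Hp (subseq_cons _ _).
Qed.

Lemma dlang_cat (P1 P2 : seq (ditem A)) (x y : seq A) :
  dlang P1 x -> dlang P2 y -> dlang (P1 ++ P2) (x ++ y).
Proof.
elim: P1 x => [|[B|a] P1 IH] x /=.
- by move=> -> H.
- move=> [w1 [w2 [-> H1 H2]]] Hy; exists w1, (w2 ++ y); split => //.
    by rewrite catA.
  exact: IH.
- by move=> [w2 [-> H2]] Hy; exists (w2 ++ y); split => //; apply: IH.
Qed.

Lemma dlang_catP (P1 P2 : seq (ditem A)) w :
  dlang (P1 ++ P2) w -> exists x y, [/\ w = x ++ y, dlang P1 x & dlang P2 y].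
Proof.
elim: P1 w => [|[B|a] P1 IH] w /=.
- by move=> H; exists [::], w.
- move=> [w1 [w2 [-> H1 H2]]].
  have [x [y [-> Hx Hy]]] := IH _ H2.
  exists (w1 ++ x), y; split => //; first by rewrite catA.
  by exists w1, x.
- move=> [w2 [-> H2]].
  have [x [y [-> Hx Hy]]] := IH _ H2.
  by exists (a :: x), y; split => //; exists x.
Qed.

Definition transfer d u w := forall s, size s <= d -> subseq s u -> subseq s w.

Inductive Dec (B : {set A}) : nat -> nat -> seq A -> seq A -> Prop :=
| DecT n v w : transfer n v w -> transfer n w v -> Dec B n 0 v w
| DecC n m v w (b : A) u w' : Dec B n m u w' ->
   transfer (n.+1 - m) v w -> transfer (n.+1 - m) w v ->
   (forall z : A, z \in B -> z \in b :: v) -> (forall z : A, z \in B -> z \in b :: w) ->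
   Dec B n.+1 m.+1 (v ++ b :: u) (w ++ b :: w').

Lemma Dec_sym B n m u w : Dec B n m u w -> Dec B n m w u.
Proof.
elim=> [n0 v0 w0 H1 H2|n0 m0 v0 w0 b u0 w' _ IH H1 H2 H3 H4].
  exact: DecT.
exact: DecC.
Qed.

Lemma Dec_full B n m u w : Dec B n m u w ->
  forall s, size s <= m -> all (fun z : A => z \in B) s -> subseq s w.
Proof.
elim=> [n0 v0 w0 _ _|n0 m0 v0 w0 b u0 w' _ IH _ _ _ H4] s.
  by case: s => [|c s] //; rewrite sub0seq.
case: s => [|c s]; first by rewrite sub0seq.
rewrite /= ltnS => Hs /andP[cB sB].
have Hs' := IH s Hs sB.
have := H4 c cB; rewrite inE => /orP[/eqP->|cw].
  rewrite -[b :: s]cat0s; apply: cat_subseq; first exact: sub0seq.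
  by rewrite /= eqxx.
rewrite -cat1s; apply: cat_subseq; first by rewrite sub1seq.
exact: subseq_trans Hs' (subseq_cons _ _).
Qed.

Lemma Dec_sub B n m u w : Dec B n m u w -> m <= n ->
  forall s, size s <= n -> all (fun z : A => z \in B) s -> subseq s u -> subseq s w.
Proof.
move=> D0; elim: D0 => {n m u w} [n v w H1 _|n m v w b u w' D IH T1 _ Hv _] hmn s Hs sB.
  exact: H1.
move=> /subseq_catP [p [q [Es Hp Hq]]].
have fullw' := Dec_full D.
have hmn' : m <= n by [].
case: (leqP (n.+1 - m) (size p)) => HL.
  rewrite -(cat_take_drop (n.+1 - m) s); apply: cat_subseq.
    apply: T1; first by rewrite size_take_min; lia.
    rewrite Es takel_cat //; exact: subseq_trans (take_subseq _ _) Hp.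
  apply: subseq_trans (subseq_cons _ b).
  apply: fullw'; first by rewrite size_drop; lia.
  by move: sB; rewrite -{1}(cat_take_drop (n.+1 - m) s) all_cat => /andP[_ ->].
have Hpw : subseq p w by apply: T1 => //; lia.
move: sB Hs; rewrite Es all_cat size_cat => /andP[pB qB] Hs.
case: q Es Hq qB Hs => [|c q] Es Hq qB Hs.
  by rewrite cats0; apply: subseq_trans Hpw (prefix_subseq _ _).
case: (c =P b) => [Ecb|Ncb].
  subst c; rewrite /= eqxx in Hq.
  apply: cat_subseq => //=; rewrite eqxx.
  apply: IH => //; first by move: Hs => /=; lia.
  by move: qB => /= /andP[].
move/eqP: Ncb => /negbTE Ncb.
rewrite /= Ncb in Hq.
case: p Hp Hpw pB Hs HL Es => [|a p] Hp Hpw pB Hs HL Es.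
  move: qB => /= /andP[cB qB].
  have cv : c \in v by move: (Hv c cB); rewrite inE Ncb.
  rewrite /= -cat1s; apply: cat_subseq.
    by apply: T1; [rewrite /=; lia | rewrite sub1seq].
  apply: subseq_trans (subseq_cons _ b).
  have Hq' : size q <= n by move: Hs => /=; lia.
  by apply: IH => //; exact: subseq_trans (subseq_cons _ _) Hq.
apply: cat_subseq => //.
apply: subseq_trans (subseq_cons _ b).
by apply: IH => //; move: Hs => /=; lia.
Qed.

Fixpoint g (j n : nat) {struct j} : nat :=
  if j is j'.+1 then \max_(m < n.+1) (m * g j' (n.+1 - m) + m + g j' (n - m))
  else 0.

Definition nlet (P : seq (ditem A)) :=
  count (fun d => if d is DLetter _ then true else false) P.

Definition Q j := forall u, #|[set x in u]| <= j -> forall n, exists P,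
  [/\ dlang P u, nlet P <= g j n, size P <= nlet P * j.+1 + j
    & forall w, dlang P w -> simn n w u /\ {subset w <= u}].

Lemma decomp (B : {set A}) u : (exists y : A, y \in B) ->
  (forall z : A, z \in B -> z \in u) ->
  exists v (b : A) u', [/\ u = v ++ b :: u', b \in B, b \notin v
                   & forall z : A, z \in B -> z \in b :: v].
Proof.
move=> [y yB]; elim/last_ind: u => [|u0 x IH] Hall.
  by have := Hall y yB.
have [H|H] := boolP [forall z, (z \in B) ==> (z \in u0)].
  have [v [b [u' [-> bB bv Hb]]]] :=
    IH (fun z zB => implyP (forallP H z) zB).
  by exists v, b, (rcons u' x); rewrite rcons_cat.
move/forallPn: H => [z]; rewrite negb_imply => /andP[zB zu0].
have := Hall z zB; rewrite mem_rcons inE => /orP[/eqP Ezx|]; last by rewrite (negbTE zu0).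
subst z.
exists u0, x, [::]; split => //; first by rewrite cats1.
by move=> t /Hall; rewrite mem_rcons.
Qed.

Lemma build j (B : {set A}) : Q j -> #|B| <= j.+1 ->
  forall u, {subset u <= B} -> forall n, exists P m,
  [/\ dlang P u, m <= n,
      nlet P <= m * g j (n.+1 - m) + m + g j (n - m),
      size P <= nlet P * j.+2 + j.+1
    & forall w, dlang P w -> Dec B n m u w /\ {subset w <= B}].
Proof.
move=> HQ HB u.
have [N] := ubnP (size u); elim: N u => // N IHN u Hu HuB n.
case: n => [|n].
  exists [:: DStar B], 0; split => //.
  - exists u, [::]; split => //; first by rewrite cats0.
    by apply/allP => x /HuB.
  - move=> w /= [w1 [w2 [-> /allP Hw1 ->]]]; split.
      by apply: DecT => s; rewrite leqn0 => /nilP -> _; rewrite sub0seq.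
    by rewrite cats0 => x /Hw1.
case: (leqP #|[set x in u]| j) => Hcard.
  have [P [H1 H2 H3 H4]] := HQ u Hcard n.+1.
  exists P, 0; split => //.
  - move: H2; rewrite ?subn0; lia.
  move=> w Hw; have [Hs Hsub] := H4 w Hw; split.
    by apply: DecT => s Hsz; rewrite (Hs s Hsz).
  by move=> x /Hsub /HuB.
have eqB : [set x in u] = B.
  apply/eqP; rewrite eqEcard; apply/andP; split; last by lia.
  by apply/subsetP => x; rewrite inE => /HuB.
have Hall : forall x, x \in B -> x \in u by move=> x; rewrite -eqB inE.
have nonempty : exists y, y \in B.
  by apply/set0Pn; rewrite -card_gt0 -eqB; lia.
have [v [b [u' [Eu bB bv Hv]]]] := decomp nonempty Hall.
have Hu' : size u' < N by move: Hu; rewrite Eu size_cat /=; lia.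
have Hu'B : {subset u' <= B}.
  by move=> x xu; apply: HuB; rewrite Eu mem_cat inE xu !orbT.
have [P' [m [Hd' Hm Hl' Hs' Hw']]] := IHN u' Hu' Hu'B n.
have Hcv : #|[set x in v]| <= j.
  have : [set x in v] \subset B :\ b.
    apply/subsetP => x; rewrite !inE => xv; apply/andP; split.
      by apply/negP => /eqP Exb; subst x; rewrite xv in bv.
    by apply: HuB; rewrite Eu mem_cat xv.
  move/subset_leq_card; move: HB; rewrite (cardsD1 b B) bB; lia.
have [Pv [Hdv Hlv Hsv Hwv]] := HQ v Hcv (n.+1 - m).
exists (Pv ++ DLetter b :: P'), m.+1; split.
- by rewrite Eu; apply: dlang_cat => //=; exists u'.
- by [].
- rewrite /nlet count_cat /= -/(nlet Pv) -/(nlet P') !subSS; nia.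
- rewrite size_cat /= /nlet count_cat /= -/(nlet Pv) -/(nlet P'); nia.
move=> w /dlang_catP [x [y [-> Hx /= [y' [-> Hy']]]]].
have [D' Hy'B] := Hw' y' Hy'.
have [Hsx Hxv] := Hwv x Hx.
split.
  rewrite Eu; apply: DecC => //.
  - by move=> s Hsz; rewrite (Hsx s Hsz).
  - by move=> s Hsz; rewrite (Hsx s Hsz).
  move=> z zB; move: (Hv z zB); rewrite !inE => /orP[->//|zv].
  apply/orP; right; rewrite -sub1seq (Hsx [:: z]) ?sub1seq //=; lia.
move=> z; rewrite mem_cat inE => /orP[/Hxv zv|/orP[/eqP->//|/Hy'B//]].
by apply: HuB; rewrite Eu mem_cat zv.
Qed.

Lemma allQ j : Q j.
Proof.
elim: j => [|j IH].
  move=> u; case: u => [|a u] Hc n.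
    exists [::]; split => //.
    by move=> w /= ->; split.
  move: Hc; rewrite leqn0 => /eqP/card0_eq/(_ a).
  by rewrite inE mem_head.
move=> u Hc n.
have HuB : {subset u <= [set x in u]} by move=> x; rewrite inE.
have [P [m [H1 H2 H3 H4 H5]]] := build IH Hc HuB n.
exists P; split => //.
  apply: leq_trans H3 _; rewrite /=.
  have Hm : m < n.+1 by rewrite ltnS.
  exact: (leq_trans _ (leq_bigmax (Ordinal Hm))).
move=> w Hw; have [D Hw'] := H5 w Hw; split.
  move=> s Hs; apply/idP/idP => Hsub.
    apply: (Dec_sub (Dec_sym D)) => //.
    by apply/allP => x xs; apply: Hw'; apply: (mem_subseq Hsub).
  apply: (Dec_sub D) => //.
  by apply/allP => x xs; apply: HuB; apply: (mem_subseq Hsub).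
by move=> x /Hw'; rewrite inE.
Qed.

Lemma g_fk j n : g j n <= fk j n.
Proof.
elim: j n => [//|j IH] n.
case: j IH => [|j] IH.
  apply/bigmax_leqP => i _; rewrite muln0 !addn0 -ltnS; exact: ltn_ord.
apply/bigmax_leqP => i _; apply: leq_trans (leq_bigmax i).
by apply: leq_add; [apply: leq_add; [apply: leq_mul|]|]; rewrite ?leqnn ?IH.
Qed.

End Aux.

Theorem lemma19 (A : finType) (n : nat) (L : seq A -> Prop) :
  0 < #|A| -> nPT n L ->
  forall u : seq A, L u ->
  exists P : seq (ditem A),
    [/\ size P <= fk #|A| n * #|A| + fk #|A| n + #|A|,
        dlang P u
      & forall w : seq A, dlang P w -> L w].
Proof.
move=> HA HL u Lu.
have [P [H1 H2 H3 H4]] := allQ (max_card (mem [set x in u])) n.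
exists P; split => //.
  have := g_fk #|A| n; nia.
move=> w Hw; have [Hs _] := H4 w Hw.
exact: (HL _ _ Hs).2.
Qed.
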